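(* Let $\mathbf P=(P,\leq,{}',0,1)$ be an atomic pseudo-orthomodular poset. Then every element of $\mathbf P$ is the join (in $\mathbf P$) of an orthogonal set of atoms lying under it, and $\mathbf P$ is atomistic.
   Context: For $M\subseteq P$, $U(M)$, $L(M)$ are the sets of upper and lower bounds; $U(a,b)=U(\{a,b\})$ etc. A poset with complementation is a bounded poset with antitone involution $'$ ($x\le y\Rightarrow y'\le x'$, $x''=x$) with $L(x,x')=\{0\}$, $U(x,x')=\{1\}$; it is pseudo-orthomodular if $L(U(L(x,y),y'),y)=L(x,y)$ for all $x,y$. A subset $S$ is orthogonal if $s\le t'$ for all distinct $s,t\in S$. An atom is a minimal element of $P\setminus\{0\}$; $\mathbf P$ is atomic if every $b>0$ lies above some atom, and atomistic if every element is the join of a set of atoms. *)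

(* Defs.v *)
(* bounded posets are mathcomp's [tbPOrderType d]
   (0 = \bot, 1 = \top); subsets of P are predicates [T -> Prop]. *)
From mathcomp Require Import all_boot all_order.
Set Implicit Arguments. Unset Strict Implicit. Unset Printing Implicit Defensive.
Import Order.Theory.
Local Open Scope order_scope.

Section PosetDefs.
Context {d : Order.disp_t} {T : tbPOrderType d}.

Definition UB (M : T -> Prop) : T -> Prop := fun u => forall m, M m -> m <= u.
Definition LB (M : T -> Prop) : T -> Prop := fun l => forall m, M m -> l <= m.

Definition pair2 (a b : T) : T -> Prop := fun z => z = a \/ z = b.
Definition addpt (M : T -> Prop) (a : T) : T -> Prop := fun z => M z \/ z = a.

Definition complementation (c : T -> T) : Prop :=
  (forall x y, x <= y -> c y <= c x) /\
  (forall x, c (c x) = x) /\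
  (forall x z, LB (pair2 x (c x)) z <-> z = \bot) /\
  (forall x z, UB (pair2 x (c x)) z <-> z = \top).

(* L(U(L(x,y), y'), y) = L(x,y) *)
Definition pseudo_orthomodular (c : T -> T) : Prop :=
  forall x y z,
    LB (addpt (UB (addpt (LB (pair2 x y)) (c y))) y) z <-> LB (pair2 x y) z.

Definition orthogonal (c : T -> T) (S : T -> Prop) : Prop :=
  forall s t, S s -> S t -> s <> t -> s <= c t.

Definition atom (a : T) : Prop :=
  a <> \bot /\ forall b, b <> \bot -> b <= a -> b = a.

Definition atomic : Prop :=
  forall b, b <> \bot -> exists a, atom a /\ a <= b.

Definition is_join (S : T -> Prop) (x : T) : Prop :=
  UB S x /\ forall u, UB S u -> x <= u.

Definition atomistic : Prop :=
  forall x, exists S : T -> Prop, (forall s, S s -> atom s) /\ is_join S x.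

End PosetDefs.

(* Main.v *)
Require Import Defs.
From mathcomp Require Import all_boot all_order.
From mathcomp Require Import classical_sets.
From Stdlib Require Import Classical.
Import Order.Theory.
Local Open Scope order_scope.

Theorem proposition5 (d : Order.disp_t) (T : tbPOrderType d) (c : T -> T)
  (hc : complementation c) (hpom : pseudo_orthomodular c)
  (hat : @atomic d T) :
  (forall x : T, exists S : T -> Prop,
      (forall s, S s -> atom s /\ s <= x) /\ orthogonal c S /\ is_join S x)
  /\ @atomistic d T.
Proof.
have [canti [cinv [cL cU]]] := hc.
have first : forall x : T, exists S : T -> Prop,
      (forall s, S s -> atom s /\ s <= x) /\ orthogonal c S /\ is_join S x.
  move=> x.
  pose P := fun A : T -> Prop => (forall s, A s -> atom s /\ s <= x) /\ orthogonal c A.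
  have [S [[PS1 PS2] maxS]] : exists A, P A /\ forall B, (A `<` B)%classic -> ~ P B.
    apply: Zorn_bigcup => F FP Ftot; split.
      by move=> s [A FA As]; exact: (proj1 (FP A FA) s As).
    move=> s t [A FA As] [B FB Bt] st.
    case: (Ftot A B FA FB) => [AB|BA].
      exact: (proj2 (FP B FB) s t (AB s As) Bt st).
    exact: (proj2 (FP A FA) s t As (BA t Bt) st).
  exists S; split => //; split => //; split.
    by move=> s Ss; case: (PS1 s Ss).
  move=> u uS.
  have H : LB (pair2 u x) x.
    apply/(hpom u x x) => m [Hm|->]; last exact: lexx.
    have cbot : c \bot = \top.
      apply/(cU \bot) => z [->|->]; [exact: le0x | exact: lexx].
    suff : c m = \bot.
      by move=> cm; rewrite -(cinv m) cm cbot; exact: lex1.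
    apply: NNPP => nz.
    have [a [atoma acm]] := hat _ nz.
    have cmx : c m <= x by rewrite -(cinv x); apply: canti; apply: Hm; right.
    have mca : m <= c a by rewrite -(cinv m); exact: canti.
    have sm : forall s, S s -> s <= m.
      move=> s Ss; apply: Hm; left => z [->|->]; [exact: uS | exact: (proj2 (PS1 s Ss))].
    have naS : ~ S a.
      move=> Sa; apply: (proj1 atoma); apply/(cL a) => z [->|->].
        exact: lexx.
      exact: le_trans (sm a Sa) mca.
    apply: (maxS (addpt S a)).
      split; first by move=> z Sz; left.
      by move=> sub; apply: naS; exact: (sub a (or_intror erefl)).
    split.
      move=> s [Ss|->]; first exact: PS1.
      by split => //; exact: le_trans acm cmx.
    move=> s t [Ss|->] [St|->] st.
    - exact: PS2.
    - exact: le_trans (sm s Ss) mca.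
    - by rewrite -{1}(cinv a); apply: canti; exact: le_trans (sm t St) mca.
    - by case: st.
  exact: H u (or_introl erefl).
split => // x.
have [S [HS [_ HJ]]] := first x.
by exists S; split => // s Ss; case: (HS s Ss).
Qed.
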